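(* Let $A$ be an infinite alphabet. If $X \subseteq A^*$ is recognizable, then there exists an equivalence relation $\sim$ on $A$ of finite index such that $X = \pi_\sim^{-1}(\pi_\sim(X))$, where $\pi_\sim\colon A^* \to (A/{\sim})^*$ is the projection morphism of $\sim$.
   Context: $A^*$ denotes the free monoid of finite words over $A$. For an equivalence relation $\sim$ on $A$, the projection morphism $\pi_\sim\colon A^*\to (A/{\sim})^*$ is the monoid morphism sending each letter $a$ to its equivalence class $[a]_\sim$. A subset $S$ of a monoid $M$ is recognizable if there exist a finite monoid $N$, a monoid morphism $\varphi\colon M \to N$ and a subset $T \subseteq N$ with $S = \varphi^{-1}(T)$. *)

(* Defs.v *)
From Stdlib Require Lists.List.
From mathcomp Require Import all_boot.
Set Implicit Arguments. Unset Strict Implicit. Unset Printing Implicit Defensive.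

(* Words over A are [seq A] (= list A); A^* is the free monoid (seq A, ++, [::]). *)

Definition infinite_type (A : Type) : Prop :=
  forall s : seq A, exists a : A, ~ Stdlib.Lists.List.In a s.

Definition is_monoid (N : Type) (mul : N -> N -> N) (one : N) : Prop :=
  associative mul /\ left_id one mul /\ right_id one mul.

Definition free_monoid_morphism (A N : Type) (mul : N -> N -> N) (one : N)
  (phi : seq A -> N) : Prop :=
  phi [::] = one /\ forall u v : seq A, phi (u ++ v) = mul (phi u) (phi v).

Definition recognizable (A : Type) (X : seq A -> Prop) : Prop :=
  exists (N : finType) (mul : N -> N -> N) (one : N),
    is_monoid mul one /\
    exists (phi : seq A -> N) (T : N -> Prop),
      free_monoid_morphism mul one phi /\ forall w, X w <-> T (phi w).

Definition equivalence_relation (A : Type) (R : A -> A -> Prop) : Prop :=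
  (forall a, R a a) /\ (forall a b, R a b -> R b a) /\
  (forall a b c, R a b -> R b c -> R a c).

(* Q together with the surjection p : A -> Q is (a model of) the quotient
   A/R: p a = p b iff R a b, and every class is hit.  R has finite index iff
   such a quotient exists with Q finite. *)
Definition is_quotient (A Q : Type) (R : A -> A -> Prop) (p : A -> Q) : Prop :=
  (forall a b, R a b <-> p a = p b) /\ (forall q : Q, exists a, p a = q).

Definition proj_morphism (A Q : Type) (p : A -> Q) : seq A -> seq Q := map p.

Definition image_words (A B : Type) (f : seq A -> seq B) (X : seq A -> Prop)
  : seq B -> Prop := fun y => exists x, X x /\ f x = y.
Definition preimage_words (A B : Type) (f : seq A -> seq B) (Y : seq B -> Prop)
  : seq A -> Prop := fun x => Y (f x).

(* Main.v *)
Require Import Defs.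
From mathcomp Require Import all_boot.
From Stdlib Require Import ClassicalDescription.

Lemma phi_map (A N : Type) (mul : N -> N -> N) (one : N) (phi : seq A -> N) :
  free_monoid_morphism mul one phi ->
  forall u v : seq A, map (fun a => phi [:: a]) u = map (fun a => phi [:: a]) v ->
  phi u = phi v.
Proof.
move=> [h0 hm]; elim=> [|a u IH] [|b v] //= [eab euv].
have -> : a :: u = [:: a] ++ u by [].
have -> : b :: v = [:: b] ++ v by [].
by rewrite !hm eab (IH _ euv).
Qed.

Theorem proposition5 (A : Type) (X : seq A -> Prop) :
  infinite_type A ->
  recognizable X ->
  exists R : A -> A -> Prop,
    equivalence_relation R /\
    exists (Q : finType) (p : A -> Q),
      is_quotient R p /\
      forall w : seq A,
        X w <-> preimage_words (proj_morphism p) (image_words (proj_morphism p) X) w.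
Proof.
move=> _ [N [mul [one [_ [phi [T [hphi hX]]]]]]].
pose P : pred N := fun x =>
  if excluded_middle_informative (exists a, phi [:: a] = x) then true else false.
have HP : forall a, P (phi [:: a]).
  move=> a; rewrite /P; case: excluded_middle_informative => // [[]].
  by exists a.
pose p : A -> {x : N | P x} := fun a => exist _ (phi [:: a]) (HP a).
exists (fun a b => phi [:: a] = phi [:: b]); split.
  split; first by [].
  split; first by move=> a b ->.
  by move=> a b c -> ->.
exists {x : N | P x}, p; split.
  split.
    move=> a b; split; last by move=> /(f_equal val).
    move=> e; apply: val_inj => /=; exact: e.
  move=> [x Px].
  have [a ea] : exists a, phi [:: a] = x.
    by move: Px; rewrite /P; case: excluded_middle_informative.
  exists a; apply: val_inj => /=; exact: ea.
move=> w; split.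
  by move=> Xw; exists w.
move=> [x [Xx ex]].
have e : phi x = phi w.
  apply: (@phi_map _ _ _ _ _ hphi).
  move/(f_equal (map val)): ex; rewrite /proj_morphism -!map_comp.
  by [].
by apply/hX; rewrite -e; apply/hX.
Qed.
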